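(* Let $\Phi$ be an irreducible reduced root system with basis $\Delta$. Let $\alpha,\beta$ be long roots with $\alpha\le\beta$. Write $\beta=\sum_{\sigma\in J}n_\sigma\sigma$ and $\alpha=\sum_{\tau\in K}m_\tau\tau$ where $J,K$ are non-empty subsets of $\Delta$ and the $n_\sigma$ (resp. $m_\tau$) are non-zero integers all of the same sign. Then: (i) if $0<\alpha\le\beta$, there is a simple path from $\beta$ to $\alpha$; (ii) if $\alpha<0<\beta$, there is a simple path from $\beta$ to $\alpha$ if and only if some long simple root belongs to both $J$ and $K$; and there is a path from $\beta$ to $\alpha$ if and only if there exist a long root $\sigma\in J$ and a long root $\tau\in K$ with $(\sigma|\tau)\neq0$; (iii) if $\alpha\le\beta<0$, there is a simple path from $\beta$ to $\alpha$.
   Context: $(\cdot|\cdot)$ is a $W$-invariant scalar product with minimal squared root length $1$, maximal squared root length $r$; long roots have squared length $r$; $\Delta_{\mathrm{lg}},\Delta_{\mathrm{sh}}$ are the long and short simple roots. For $x,y$ in the ambient space, $y\le x$ means $x-y$ is a non-negative combination of simple roots. For a long root $\gamma=\sum_{\delta\in\Delta}n_\delta\delta$, $\mathrm{ht}^\vee(\gamma)=\sum_{\delta\in\Delta_{\mathrm{lg}}}n_\delta+\frac1r\sum_{\delta\in\Delta_{\mathrm{sh}}}n_\delta$; $\tilde\alpha$ is the highest root. Level of a long root: $L(\gamma)=\mathrm{ht}^\vee(\tilde\alpha)-\mathrm{ht}^\vee(\gamma)$ if $\gamma>0$, and $L(\gamma)=\mathrm{ht}^\vee(\tilde\alpha)-\mathrm{ht}^\vee(\gamma)-1$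 if $\gamma<0$. For long roots $\beta',\alpha'$ and a positive root $\gamma$, $\beta'\xrightarrow{\gamma}\alpha'$ means $\alpha'=s_\gamma(\beta')$ and $L(\alpha')=L(\beta')+1$. A path from $\beta$ to $\alpha$ is a sequence of long roots $\beta=\beta_0\xrightarrow{\gamma_1}\beta_1\cdots\xrightarrow{\gamma_k}\beta_k=\alpha$ with positive roots $\gamma_i$; it is a simple path if all $\gamma_i$ are simple roots. *)

(* Defs.v *)
From HB Require Import structures.
From mathcomp Require Import all_boot all_order all_algebra.
From mathcomp Require Import boolp reals.
Set Implicit Arguments. Unset Strict Implicit. Unset Printing Implicit Defensive.
Import Order.TTheory GRing.Theory Num.Theory.
Local Open Scope ring_scope.

Section RootSystems.
Variables (R : realType) (n : nat).
Local Notation V := 'rV[R]_n.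

Definition dotv (x y : V) : R := (x *m y^T) 0 0.

Definition refl (a x : V) : V := x - (2 * dotv x a / dotv a a) *: a.

Definition is_reduced_root_system (Phi : seq V) : Prop :=
  [/\ uniq Phi /\ (0 : V) \notin Phi, (span Phi = fullv)%VS,
      (forall a b, a \in Phi -> b \in Phi -> refl a b \in Phi),
      (forall a b, a \in Phi -> b \in Phi ->
          exists z : int, 2 * dotv b a / dotv a a = z%:~R) &
      (forall a (c : R), a \in Phi -> c *: a \in Phi -> c = 1 \/ c = -1)].

Definition is_irreducible (Phi : seq V) : Prop :=
  Phi != [::] /\
  forall P : pred V,
    (forall a b, a \in Phi -> b \in Phi -> P a -> ~~ P b -> dotv a b = 0) ->
    all P Phi \/ all (predC P) Phi.

Definition is_basis (Phi : seq V) (l : nat) (Delta : l.-tuple V) : Prop :=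
  [/\ {subset Delta <= Phi}, free Delta &
      forall g, g \in Phi -> exists c : 'I_l -> int,
        g = \sum_(i < l) (c i)%:~R *: tnth Delta i /\
        ((forall i, 0 <= c i) \/ (forall i, c i <= 0))].

Definition coef l (Delta : l.-tuple V) (i : 'I_l) (x : V) : R := coord Delta i x.

Definition rle l (Delta : l.-tuple V) (y x : V) : Prop :=
  exists c : 'I_l -> R, (forall i, 0 <= c i) /\ x - y = \sum_(i < l) c i *: tnth Delta i.
Definition rlt l (Delta : l.-tuple V) (y x : V) : Prop := rle Delta y x /\ y <> x.

Definition long (Phi : seq V) (x : V) : bool :=
  (x \in Phi) && all (fun b => dotv b b <= dotv x x) Phi.

Definition maxsq (Phi : seq V) : R := foldr (fun a m => Num.max (dotv a a) m) 0 Phi.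
Definition minsq (Phi : seq V) : R :=
  foldr (fun a m => Num.min (dotv a a) m) (maxsq Phi) Phi.
Definition ratio (Phi : seq V) : R := maxsq Phi / minsq Phi.

Definition htv (Phi : seq V) l (Delta : l.-tuple V) (g : V) : R :=
  \sum_(i < l | long Phi (tnth Delta i)) coef Delta i g
  + (ratio Phi)^-1 * \sum_(i < l | ~~ long Phi (tnth Delta i)) coef Delta i g.

(* level of a long root, relative to the highest root ta *)
Definition level (Phi : seq V) l (Delta : l.-tuple V) (ta g : V) : R :=
  if `[< rlt Delta 0 g >] then htv Phi Delta ta - htv Phi Delta g
  else htv Phi Delta ta - htv Phi Delta g - 1.

Definition arrow (Phi : seq V) l (Delta : l.-tuple V) (ta b' g a' : V) : Prop :=
  [/\ long Phi b' && long Phi a', g \in Phi, rlt Delta 0 g, a' = refl g b' &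
      level Phi Delta ta a' = level Phi Delta ta b' + 1].

Fixpoint is_path (Phi : seq V) l (Delta : l.-tuple V) (ta : V)
    (b : V) (steps : seq (V * V)) (a : V) : Prop :=
  match steps with
  | [::] => b = a
  | (g, b1) :: s => arrow Phi Delta ta b g b1 /\ is_path Phi Delta ta b1 s a
  end.

Definition has_path (Phi : seq V) l (Delta : l.-tuple V) (ta b a : V) : Prop :=
  long Phi b /\ exists steps, is_path Phi Delta ta b steps a.

Definition has_simple_path (Phi : seq V) l (Delta : l.-tuple V) (ta b a : V) : Prop :=
  long Phi b /\ exists steps, is_path Phi Delta ta b steps a /\
    all (fun p => p.1 \in (Delta : seq V)) steps.

End RootSystems.

(* Main.v *)
Require Import Defs.
From HB Require Import structures.
From mathcomp Require Import all_boot all_order all_algebra.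
From mathcomp Require Import reals.
From mathcomp Require Import boolp.
From mathcomp Require Import zify ring lra.
Import Order.TTheory GRing.Theory Num.Theory.
Local Open Scope ring_scope.
Set Implicit Arguments. Unset Strict Implicit. Unset Printing Implicit Defensive.



Section Dot.
Variables (R : realType) (n : nat).
Local Notation V := 'rV[R]_n.
Local Notation d := (@dotv R n).

Lemma dotvE (x y : V) : d x y = \sum_j x 0 j * y 0 j.
Proof. by rewrite /dotv !mxE; apply: eq_bigr => j _; rewrite !mxE. Qed.

Lemma dotvC (x y : V) : d x y = d y x.
Proof. by rewrite !dotvE; apply: eq_bigr => j _; rewrite mulrC. Qed.

Lemma dotvDl (x y z : V) : d (x + y) z = d x z + d y z.
Proof. by rewrite !dotvE -big_split; apply: eq_bigr => j _; rewrite !mxE mulrDl. Qed.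

Lemma dotvZl a (x z : V) : d (a *: x) z = a * d x z.
Proof. by rewrite !dotvE mulr_sumr; apply: eq_bigr => j _; rewrite !mxE mulrA. Qed.

Lemma dotvNl (x z : V) : d (- x) z = - d x z.
Proof. by rewrite -scaleN1r dotvZl mulN1r. Qed.

Lemma dotvBl (x y z : V) : d (x - y) z = d x z - d y z.
Proof. by rewrite dotvDl dotvNl. Qed.

Lemma dotvDr (x y z : V) : d z (x + y) = d z x + d z y.
Proof. by rewrite dotvC dotvDl !(dotvC z). Qed.
Lemma dotvZr a (x z : V) : d z (a *: x) = a * d z x.
Proof. by rewrite dotvC dotvZl dotvC. Qed.
Lemma dotvNr (x z : V) : d z (- x) = - d z x.
Proof. by rewrite dotvC dotvNl dotvC. Qed.
Lemma dotvBr (x y z : V) : d z (x - y) = d z x - d z y.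
Proof. by rewrite dotvC dotvBl !(dotvC z). Qed.
Lemma dotv0l (z : V) : d 0 z = 0.
Proof. by rewrite -(scale0r 0) dotvZl mul0r. Qed.

Lemma dotv_suml I (r : seq I) (P : pred I) (F : I -> V) z :
  d (\sum_(i <- r | P i) F i) z = \sum_(i <- r | P i) d (F i) z.
Proof.
by apply: (big_morph (fun x => d x z)); [move=> x y; exact: dotvDl | exact: dotv0l].
Qed.

Lemma dotv_ge0 (x : V) : 0 <= d x x.
Proof. by rewrite dotvE sumr_ge0 // => j _; rewrite -expr2 sqr_ge0. Qed.

Lemma dotv_eq0 (x : V) : d x x = 0 -> x = 0.
Proof.
rewrite dotvE => /eqP; rewrite psumr_eq0 => [/allP H|j _]; last by rewrite -expr2 sqr_ge0.
apply/rowP => j; rewrite mxE; have := H j (mem_index_enum _).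
by rewrite /= mulf_eq0 orbb => /eqP.
Qed.

Lemma dotv_gt0 (x : V) : x != 0 -> 0 < d x x.
Proof.
move=> hx; rewrite lt_neqAle dotv_ge0 andbT; apply/eqP => h.
by move/eqP: hx; apply; apply: dotv_eq0.
Qed.

Lemma cs_aux (a b : V) : b != 0 ->
  d (a - (d a b / d b b) *: b) (a - (d a b / d b b) *: b) =
  d a a - d a b ^+ 2 / d b b.
Proof.
move=> hb; have hbb := dotv_gt0 hb.
rewrite !(dotvBl, dotvBr, dotvZl, dotvZr) (dotvC b a).
field; exact: lt0r_neq0.
Qed.

Lemma cs (a b : V) : b != 0 -> d a b ^+ 2 <= d a a * d b b.
Proof.
move=> hb; have hbb := dotv_gt0 hb.
have := dotv_ge0 (a - (d a b / d b b) *: b); rewrite cs_aux //.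
rewrite subr_ge0 ler_pdivrMr //.
Qed.

Lemma cs_eq (a b : V) : b != 0 -> d a b ^+ 2 = d a a * d b b ->
  a = (d a b / d b b) *: b.
Proof.
move=> hb h; have hbb := dotv_gt0 hb.
apply/eqP; rewrite -subr_eq0; apply/eqP; apply: dotv_eq0.
rewrite cs_aux // h; field; exact: lt0r_neq0.
Qed.

End Dot.



Section Int.
Variable R : realType.
Definition isint (x : R) := exists z : int, x = z%:~R.
Lemma isint_int (z : int) : isint z%:~R. Proof. by exists z. Qed.
Lemma isint0 : isint 0. Proof. by exists 0. Qed.
Lemma isint1 : isint 1. Proof. by exists 1. Qed.
Lemma isintD x y : isint x -> isint y -> isint (x + y).
Proof. by move=> [a ->] [b ->]; exists (a + b); rewrite intrD. Qed.
Lemma isintN x : isint x -> isint (- x).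
Proof. by move=> [a ->]; exists (- a); rewrite intrN. Qed.
Lemma isintB x y : isint x -> isint y -> isint (x - y).
Proof. by move=> hx hy; apply: isintD => //; apply: isintN. Qed.
Lemma isintM x y : isint x -> isint y -> isint (x * y).
Proof. by move=> [a ->] [b ->]; exists (a * b); rewrite intrM. Qed.
Lemma isint_sum I (r : seq I) (P : pred I) (F : I -> R) :
  (forall i, P i -> isint (F i)) -> isint (\sum_(i <- r | P i) F i).
Proof. by move=> h; apply: big_ind => //; [exact: isint0 | exact: isintD]. Qed.
Lemma isint_ge1 x : isint x -> 0 < x -> 1 <= x.
Proof. by move=> [z ->]; rewrite ltr0z ler1z; lia. Qed.
End Int.

Section RS.
Variables (R : realType) (n l : nat) (Phi : seq 'rV[R]_n) (Delta : l.-tuple 'rV[R]_n).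
Hypotheses (hRS : is_reduced_root_system Phi) (hirr : is_irreducible Phi)
  (hbas : is_basis Phi Delta).
Local Notation V := 'rV[R]_n.
Local Notation d := (@dotv R n).
Local Notation dl i := (tnth Delta i).
Local Notation c := (coef Delta).

Definition ncart (x a : V) := 2 * d x a / d a a.

Lemma root_neq0 (a : V) : a \in Phi -> a != 0.
Proof. by case: hRS => -[_ h0] _ _ _ _ ha; apply: contraNneq h0 => <-. Qed.

Lemma reflE a x : refl a x = x - ncart x a *: a. Proof. by []. Qed.

Lemma refl_in (a : V) (x : V) : a \in Phi -> x \in Phi -> refl a x \in Phi.
Proof. by case: hRS => _ _ h _ _; apply: h. Qed.

Lemma ncart_int (a : V) (x : V) : a \in Phi -> x \in Phi -> isint (ncart x a).
Proof. by case: hRS => _ _ _ h _ ha hx; have [z hz] := h _ _ ha hx; exists z. Qed.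

Lemma red (a : V) (b : V) (k : R) : a \in Phi -> b \in Phi -> a = k *: b -> k = 1 \/ k = -1.
Proof. by case: hRS => _ _ _ _ h ha hb e; apply: (h b k hb); rewrite -e. Qed.

Lemma refl_dot (a : V) (x : V) (y : V) : a != 0 -> d (refl a x) y = d x y - ncart x a * d a y.
Proof. by move=> _; rewrite reflE dotvBl dotvZl. Qed.

Lemma refl_len (a : V) (x : V) : a != 0 -> d (refl a x) (refl a x) = d x x.
Proof.
move=> ha; have haa := dotv_gt0 ha.
rewrite !reflE /ncart !(dotvBl, dotvBr, dotvZl, dotvZr) (dotvC a x).
field; exact: lt0r_neq0.
Qed.

Lemma ncart_aa (a : V) : a != 0 -> ncart a a = 2.
Proof. by move=> ha; rewrite /ncart mulfK // lt0r_neq0 // dotv_gt0. Qed.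

Lemma refl_aa (a : V) : a != 0 -> refl a a = - a.
Proof. by move=> ha; rewrite reflE ncart_aa // scaler_nat mulr2n opprD addrA subrr add0r. Qed.

Lemma opp_in (a : V) : a \in Phi -> - a \in Phi.
Proof. by move=> ha; rewrite -refl_aa ?root_neq0 // refl_in. Qed.

Lemma refl_invol (a : V) (x : V) : a != 0 -> refl a (refl a x) = x.
Proof.
move=> ha; have haa := dotv_gt0 ha.
have e : ncart (refl a x) a = - ncart x a.
  rewrite /ncart refl_dot // /ncart; field; exact: lt0r_neq0.
by rewrite [refl a (refl a x)]reflE e scaleNr opprK reflE subrK.
Qed.

Lemma hfree : free Delta. Proof. by case: hbas. Qed.
Lemma dl_in i : dl i \in Phi. Proof. by case: hbas => h _ _; apply: h; apply: mem_tnth. Qed.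

Lemma in_span (x : V) : x \in span Delta.
Proof.
have : (span Phi <= span Delta)%VS.
  apply/span_subvP => g hg; case: hbas => _ _ /(_ g hg) [k [-> _]].
  by apply: memv_suml => i _; apply: memvZ; apply: memv_span; apply: mem_tnth.
case: hRS => _ -> _ _ _ /subvP; apply; exact: memvf.
Qed.

Lemma decomp (x : V) : x = \sum_i c i x *: dl i.
Proof.
rewrite {1}(coord_span (in_span x)); apply: eq_bigr => i _.
by rewrite (tnth_nth 0).
Qed.

Lemma coefvD (i : 'I_l) (x : V) (y : V) : c i (x + y) = c i x + c i y. Proof. by rewrite /coef linearD. Qed.
Lemma coefvZ (i : 'I_l) (k : R) (x : V) : c i (k *: x) = k * c i x. Proof. by rewrite /coef linearZ. Qed.
Lemma coefvN (i : 'I_l) (x : V) : c i (- x) = - c i x. Proof. by rewrite /coef linearN. Qed.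
Lemma coefvB (i : 'I_l) (x : V) (y : V) : c i (x - y) = c i x - c i y. Proof. by rewrite /coef linearB. Qed.
Lemma coefv0 i : c i 0 = 0. Proof. by rewrite /coef linear0. Qed.
Lemma coef_sum (k : 'I_l -> R) j : c j (\sum_i k i *: dl i) = k j.
Proof.
rewrite /coef -(coord_sum_free k j hfree); congr coord; apply: eq_bigr => i _.
by rewrite (tnth_nth 0).
Qed.
Lemma coef_dl i j : c j (dl i) = (i == j)%:R.
Proof. by rewrite /coef (tnth_nth 0) coord_free // hfree. Qed.

Lemma eq_coef (x : V) (y : V) : (forall i, c i x = c i y) -> x = y.
Proof. by move=> h; rewrite (decomp x) (decomp y); apply: eq_bigr => i _; rewrite h. Qed.

Lemma root_coef (a : V) : a \in Phi -> exists k : 'I_l -> int,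
  (forall i, c i a = (k i)%:~R) /\ ((forall i, 0 <= k i) \/ (forall i, k i <= 0)).
Proof.
case: hbas => _ _ /[apply] -[k [e hk]]; exists k; split => // i.
by rewrite e coef_sum.
Qed.

Lemma root_int (a : V) (i : 'I_l) : a \in Phi -> isint (c i a).
Proof. by case/root_coef => k [h _]; exists (k i). Qed.

Definition pos (x : V) := forall i, 0 <= c i x.
Definition neg (x : V) := forall i, c i x <= 0.

Lemma root_sign (a : V) : a \in Phi -> pos a \/ neg a.
Proof.
case/root_coef => k [h [hk|hk]]; [left|right] => i; rewrite h.
  by rewrite ler0z. by rewrite lerz0.
Qed.

Lemma pos_neg0 (x : V) : pos x -> neg x -> x = 0.
Proof.
move=> hp hn; apply: eq_coef => i; rewrite coefv0; apply/eqP.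
by rewrite eq_le hn hp.
Qed.

Lemma rle_coef (x : V) (y : V) : rle Delta y x <-> forall i, c i y <= c i x.
Proof.
split.
  by move=> [k [hk e]] i; rewrite -subr_ge0 -coefvB e coef_sum.
move=> h; exists (fun i => c i x - c i y); split; first by move=> i; rewrite subr_ge0.
by rewrite {1}(decomp (x - y)); apply: eq_bigr => i _; rewrite coefvB.
Qed.

Lemma rlt0E (x : V) : rlt Delta 0 x <-> pos x /\ x != 0.
Proof.
rewrite /rlt rle_coef; split => -[h1 h2]; split.
- by move=> i; rewrite -(coefv0 i).
- by apply/eqP => e; apply: h2; rewrite e.
- by move=> i; rewrite coefv0.
- by move=> e; move/eqP: h2; apply; rewrite e.
Qed.

Lemma rltE0 (x : V) : rlt Delta x 0 <-> neg x /\ x != 0.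
Proof.
rewrite /rlt rle_coef; split => -[h1 h2]; split.
- by move=> i; rewrite -(coefv0 i).
- by apply/eqP.
- by move=> i; rewrite coefv0.
- by apply/eqP.
Qed.

Lemma root_pn (a : V) : a \in Phi -> rlt Delta 0 a \/ rlt Delta a 0.
Proof.
move=> ha; have h0 := root_neq0 ha.
by case: (root_sign ha) => h; [left; apply/rlt0E | right; apply/rltE0].
Qed.

Lemma rle_trans (x : V) (y : V) (z : V) : rle Delta x y -> rle Delta y z -> rle Delta x z.
Proof.
move=> /rle_coef h1 /rle_coef h2; apply/rle_coef => i; exact: le_trans (h1 i) (h2 i).
Qed.

End RS.



Section RS3.
Variables (R : realType) (n l : nat) (Phi : seq 'rV[R]_n) (Delta : l.-tuple 'rV[R]_n).
Hypotheses (hRS : is_reduced_root_system Phi) (hirr : is_irreducible Phi)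
  (hbas : is_basis Phi Delta).
Local Notation V := 'rV[R]_n.
Local Notation d := (@dotv R n).
Local Notation dl i := (tnth Delta i).
Local Notation c := (coef Delta).
Local Notation M := (maxsq Phi).
Local Notation m := (minsq Phi).

Lemma maxsq_ge (a : V) : a \in Phi -> d a a <= M.
Proof.
rewrite /maxsq; elim: Phi a => [//|b s IH] a; rewrite in_cons /= le_max.
by case/orP => [/eqP ->|/IH ->]; rewrite ?lexx ?orbT.
Qed.

Lemma maxsq_ex : exists2 a, a \in Phi & d a a = M.
Proof.
case: hirr => hne _; rewrite /maxsq; move: hne; elim: Phi => [//|b s IH] _ /=.
case: s IH => [|b' s'] IH /=.
  by exists b; rewrite ?mem_head // max_l // dotv_ge0.
have [a ha ea] := IH isT; rewrite maxEle; case: ifP => _.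
  by exists a; rewrite // in_cons ha orbT.
by exists b; rewrite ?mem_head.
Qed.

Lemma M_gt0 : 0 < M.
Proof.
have [a ha <-] := maxsq_ex; apply: dotv_gt0. exact: (root_neq0 hRS ha).
Qed.

Lemma foldmin_le (s : seq V) t (a : V) : a \in s ->
  foldr (fun a m => Num.min (d a a) m) t s <= d a a.
Proof.
elim: s => [//|b s IH]; rewrite in_cons /= ge_min.
by case/orP => [/eqP ->|/IH ->]; rewrite ?lexx ?orbT.
Qed.

Lemma foldmin_ex (s : seq V) t : foldr (fun a m => Num.min (d a a) m) t s = t \/
  exists2 a, a \in s & d a a = foldr (fun a m => Num.min (d a a) m) t s.
Proof.
elim: s => [|b s IH] /=; first by left.
rewrite minEle; case: ifP => _.
  by right; exists b; rewrite ?mem_head.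
case: IH => [->|[a ha ea]]; [by left | right].
by exists a; rewrite // in_cons ha orbT.
Qed.

Lemma minsq_le (a : V) : a \in Phi -> m <= d a a.
Proof. exact: foldmin_le. Qed.

Lemma minsq_ex : exists2 a, a \in Phi & d a a = m.
Proof.
case: (foldmin_ex Phi M) => [e|//]; have [a ha ea] := maxsq_ex.
by exists a; rewrite // /minsq e.
Qed.

Lemma m_gt0 : 0 < m.
Proof.
have [a ha <-] := minsq_ex; apply: dotv_gt0; exact: (root_neq0 hRS ha).
Qed.

Lemma m_le_M : m <= M.
Proof. have [a ha <-] := maxsq_ex; exact: minsq_le. Qed.

Lemma longE (x : V) : long Phi x = (x \in Phi) && (d x x == M).
Proof.
rewrite /long; case hx: (x \in Phi) => //=; apply/idP/idP.
  move=> /allP h; have [a ha ea] := maxsq_ex.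
  by rewrite eq_le maxsq_ge //= -ea h.
by move=> /eqP e; apply/allP => b hb; rewrite e maxsq_ge.
Qed.

Lemma longP (x : V) : long Phi x -> x \in Phi /\ d x x = M.
Proof. by rewrite longE => /andP[-> /eqP]. Qed.

Lemma prop_len (a b : V) (k : R) : a \in Phi -> b \in Phi -> a = k *: b -> d a a = d b b.
Proof.
move=> ha hb e; have := red hRS ha hb e; rewrite e dotvZl dotvZr mulrA.
by case=> ->; rewrite ?mulr1 ?mulN1r ?opprK ?mul1r.
Qed.

Lemma ncart_rel (a b : V) : a \in Phi -> b \in Phi ->
  d b b * ncart a b = d a a * ncart b a.
Proof.
move=> ha hb; have hbb := dotv_gt0 (root_neq0 hRS hb).
have haa := dotv_gt0 (root_neq0 hRS ha).
rewrite /ncart (dotvC b a); field; apply/andP; split; exact: lt0r_neq0.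
Qed.

Lemma ncart_eq0 (a b : V) : b \in Phi -> (ncart a b == 0) = (d a b == 0).
Proof.
move=> hb; have hbb := dotv_gt0 (root_neq0 hRS hb).
rewrite /ncart mulf_eq0 invr_eq0 (negbTE (lt0r_neq0 hbb)) orbF mulf_eq0.
by rewrite pnatr_eq0.
Qed.

Lemma cartan (a b : V) : a \in Phi -> b \in Phi -> d a a <= d b b ->
  (forall k, a <> k *: b) ->
  exists z1 z2 : int, [/\ ncart a b = z1%:~R, ncart b a = z2%:~R &
   (z1 = 0 /\ z2 = 0) \/ (z1 = 1 /\ 0 < z2 < 4) \/ (z1 = -1 /\ -4 < z2 < 0)].
Proof.
move=> ha hb hle hnp.
have hbb := dotv_gt0 (root_neq0 hRS hb); have haa := dotv_gt0 (root_neq0 hRS ha).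
have [z1 e1] := ncart_int hRS hb ha; have [z2 e2] := ncart_int hRS ha hb.
exists z1, z2; split => //.
have hb0 : b != 0 := root_neq0 hRS hb.
have hcs : d a b ^+ 2 < d a a * d b b.
  rewrite lt_neqAle cs // andbT; apply/eqP => h; exact: (hnp _ (cs_eq hb0 h)).
have hrel := ncart_rel ha hb.
have hprod : ncart a b * ncart b a = ncart a b ^+ 2 * (d b b / d a a).
  rewrite /ncart (dotvC b a); field; apply/andP; split; exact: lt0r_neq0.
have hlt4 : ncart a b * ncart b a < 4.
  have -> : ncart a b * ncart b a = 4 * (d a b ^+ 2 / (d a a * d b b)).
    rewrite /ncart (dotvC b a); field; apply/andP; split; exact: lt0r_neq0.
  rewrite -[X in _ < X]mulr1 ltr_pM2l // ltr_pdivrMr ?mul1r //.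
  exact: mulr_gt0.
have hsq : ncart a b ^+ 2 <= ncart a b * ncart b a.
  rewrite hprod -[X in X <= _]mulr1 ler_wpM2l ?sqr_ge0 //.
  by rewrite ler_pdivlMr // mul1r.
have hz0 : z1 = 0 -> z2 = 0.
  move=> h0; move: hrel; rewrite e1 e2 h0 mulr0 => /esym/eqP.
  rewrite mulf_eq0 (negbTE (lt0r_neq0 haa)) /= intr_eq0 => /eqP //.
have hpos : z1 != 0 -> 0 < z1 * z2.
  move=> hz; rewrite -(ltr0z R) intrM -e1 -e2 hprod mulr_gt0 //.
    by rewrite exprn_even_gt0 //= e1 intr_eq0.
  exact: divr_gt0.
rewrite e1 e2 expr2 -!intrM ler_int in hsq.
rewrite e1 e2 -intrM -[4]/(4%:~R) ltr_int in hlt4.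
have : (-1 <= z1 <= 1)%R by nia.
case: (z1 =P 0) => [h|hz]; first by left; split => //; exact: hz0.
have := hpos (introN eqP hz) => hp.
move=> hb1; right; have : z1 = 1 \/ z1 = -1 by lia.
case=> h; subst z1; [left|right]; split => //; lia.
Qed.


Inductive reach (a : V) : V -> Prop :=
| reach0 : reach a a
| reachS x g : reach a x -> g \in Phi -> reach a (refl g x).

Lemma reach_in (a x : V) : a \in Phi -> reach a x -> x \in Phi /\ d x x = d a a.
Proof.
move=> ha; elim => [|y g _ [hy e] hg]; first by split.
by split; [exact: refl_in | rewrite refl_len ?e //; exact: (root_neq0 hRS hg)].
Qed.

Lemma reach_all (a : V) : a \in Phi -> forall b, b \in Phi -> exists x, reach a x /\ d x b != 0.
Proof.
move=> ha.
pose P := fun g : V => `[< exists x, reach a x /\ d x g != 0 >].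
case: hirr => _ /(_ P) [].
- move=> a0 b0 ha0 hb0 /asboolP [x [hx hxa]] /asboolP hnb.
  have hr : reach a (refl a0 x) := reachS hx ha0.
  have h1 : d (refl a0 x) b0 = 0.
    by apply/eqP; case: eqP => // /eqP h; exfalso; apply: hnb; exists (refl a0 x).
  have h2 : d x b0 = 0.
    by apply/eqP; case: eqP => // /eqP h; exfalso; apply: hnb; exists x.
  move: h1; rewrite refl_dot ?(root_neq0 hRS ha0) // h2 sub0r => /eqP.
  rewrite oppr_eq0 mulf_eq0 => /orP[|/eqP //].
  by rewrite ncart_eq0 // (negbTE hxa).
- by move=> /allP h b hb; move: (h b hb) => /asboolP.
- move=> /allP /(_ a ha) /= /asboolP []; exists a; split; first exact: reach0.
  exact: (lt0r_neq0 (dotv_gt0 (root_neq0 hRS ha))).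
Qed.

Lemma ratio_len (a b : V) : a \in Phi -> b \in Phi -> d a b != 0 -> d a a <= d b b ->
  d b b = d a a \/ d b b = 2 * d a a \/ d b b = 3 * d a a.
Proof.
move=> ha hb hab hle.
case: (EM (exists k, a = k *: b)) => [[k e]|hnp].
  by left; rewrite (prop_len ha hb e).
have [z1 [z2 [e1 e2 hz]]] := cartan ha hb hle (fun k e => hnp (ex_intro _ k e)).
have hrel := ncart_rel ha hb; rewrite e1 e2 in hrel.
have hz1 : z1 != 0.
  by move: hab; rewrite -ncart_eq0 // e1 intr_eq0.
case: hz => [[h _]|[[h1 h2]|[h1 h2]]]; first by rewrite h in hz1.
- have : z2 = 1 \/ z2 = 2 \/ z2 = 3 by lia.
  by subst z1; case=> [|[|]] e; rewrite e /= in hrel; lra.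
- have : z2 = -1 \/ z2 = -2 \/ z2 = -3 by lia.
  by subst z1; case=> [|[|]] e; rewrite e /= in hrel; lra.
Qed.

Lemma two_len (a : V) : a \in Phi -> d a a = M \/ d a a = m.
Proof.
move=> ha; case: (EM (d a a = M)) => [|hM]; [by left|right].
case: (EM (d a a = m)) => // hm; exfalso.
have [am ham em] := minsq_ex; have [aM haM eM] := maxsq_ex.
have hm0 := m_gt0.
have [x [hx hxa]] := reach_all ham ha; have [hxin hxl] := reach_in ham hx.
have s1 := ratio_len hxin ha hxa; rewrite hxl em in s1.
have {s1} s1 := s1 (minsq_le ha).
have [y [hy hya]] := reach_all ha haM; have [hyin hyl] := reach_in ha hy.
have s2 := ratio_len hyin haM hya; rewrite hyl eM in s2.
have {s2} s2 := s2 (maxsq_ge ha).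
have [z [hz hza]] := reach_all ham haM; have [hzin hzl] := reach_in ham hz.
have s3 := ratio_len hzin haM hza; rewrite hzl eM em in s3.
have {s3} s3 := s3 m_le_M.
lra.
Qed.

Lemma htvE (g : V) : htv Phi Delta g = \sum_i (d (dl i) (dl i) / M) * c i g.
Proof.
rewrite /htv [RHS](bigID (fun i => long Phi (dl i))) /=; congr (_ + _).
  apply: eq_bigr => i /longP [_ ->]; rewrite divff ?mul1r //.
  exact: (lt0r_neq0 M_gt0).
rewrite mulr_sumr; apply: eq_bigr => i hi.
have hin := dl_in hbas i.
have -> : d (dl i) (dl i) = m.
  case: (two_len hin) => // e; move: hi; rewrite longE hin e eqxx //.
by rewrite /ratio invf_div.
Qed.


Definition hgt (x : V) := \sum_i c i x.
Definition CP (g : V) := forall i, isint (c i g * d (dl i) (dl i) / d g g).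

Lemma hgtB x y : hgt (x - y) = hgt x - hgt y.
Proof. by rewrite /hgt -sumrB; apply: eq_bigr => i _; rewrite coefvB. Qed.

Lemma sum_ind (i : 'I_l) (k : R) : \sum_j k * (i == j)%:R = k.
Proof.
rewrite (bigD1 i) //= eqxx mulr1 big1 ?addr0 // => j hj.
by rewrite eq_sym (negbTE hj) mulr0.
Qed.

Lemma hgt_dl i k : hgt (k *: dl i) = k.
Proof. by rewrite /hgt -[RHS](sum_ind i); apply: eq_bigr => j _; rewrite coefvZ (coef_dl hbas). Qed.

Lemma dot_decomp (g y : V) : d g y = \sum_i c i g * d (dl i) y.
Proof.
by rewrite {1}(decomp hRS hbas g) dotv_suml; apply: eq_bigr => i _; rewrite dotvZl.
Qed.

Lemma pos_nz (g : V) : pos Delta g -> g != 0 -> exists i, 0 < c i g.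
Proof.
move=> hp hg; case: (EM (exists i, 0 < c i g)) => // hn; exfalso.
move/eqP: hg; apply; apply: (eq_coef hRS hbas) => i; rewrite coefv0.
apply/eqP; rewrite eq_le hp andbT leNgt; apply/negP => h; apply: hn; by exists i.
Qed.

Lemma pos_hgt (g : V) : g \in Phi -> pos Delta g -> 1 <= hgt g.
Proof.
move=> hg hp; have [i hi] := pos_nz hp (root_neq0 hRS hg).
have h1 := isint_ge1 (root_int hbas i hg) hi.
rewrite /hgt (bigD1 i) //=; apply: le_trans h1 _; rewrite lerDl.
by apply: sumr_ge0 => j _.
Qed.

Lemma dl_neq0 i : dl i != 0. Proof. exact: (root_neq0 hRS (dl_in hbas i)). Qed.

Lemma coef_refl_dl (y : V) i j :
  c j (refl (dl i) y) = c j y - ncart y (dl i) * (i == j)%:R.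
Proof. by rewrite reflE coefvB coefvZ (coef_dl hbas). Qed.

Lemma prop_dl (g : V) i : g \in Phi -> pos Delta g ->
  (forall j, j != i -> c j g = 0) -> g = dl i.
Proof.
move=> hg hp h0.
have e : g = c i g *: dl i.
  apply: (eq_coef hRS hbas) => j; rewrite coefvZ (coef_dl hbas).
  case: (eqVneq i j) => [<-|hij]; first by rewrite mulr1.
  by rewrite mulr0 h0 // eq_sym.
have := red hRS hg (dl_in hbas i) e; case=> hc; first by rewrite e hc scale1r.
by have := hp i; rewrite hc ler0N1.
Qed.

Lemma descent (g : V) : g \in Phi -> pos Delta g -> (forall i, g != dl i) ->
  exists i, [/\ pos Delta (refl (dl i) g), 1 <= ncart g (dl i) &
    hgt (refl (dl i) g) = hgt g - ncart g (dl i)].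
Proof.
move=> hg hp hns.
have hgg := dotv_gt0 (root_neq0 hRS hg).
have [i hi] : exists i, 0 < c i g * d (dl i) g.
  case: (EM (exists i, 0 < c i g * d (dl i) g)) => // hn; exfalso.
  have : d g g <= 0.
    rewrite dot_decomp; apply: sumr_le0 => i _; rewrite leNgt; apply/negP => h.
    by apply: hn; exists i.
  by rewrite leNgt hgg.
have hci : 0 < c i g.
  rewrite lt_neqAle hp andbT; apply/eqP => e; move: hi; rewrite -e mul0r ltxx //.
have hdi : 0 < d (dl i) g by rewrite pmulr_rgt0 in hi.
have hii := dotv_gt0 (dl_neq0 i).
have hk : 1 <= ncart g (dl i).
  apply: isint_ge1; first exact: (ncart_int hRS (dl_in hbas i) hg).
  by rewrite /ncart dotvC; apply: divr_gt0 => //; apply: mulr_gt0.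
exists i; split => //; last first.
  by rewrite reflE hgtB hgt_dl.
have [j hj hcj] : exists2 j, j != i & 0 < c j g.
  case: (EM (exists2 j, j != i & 0 < c j g)) => // hn; exfalso.
  move/eqP: (hns i); apply; apply: prop_dl => // j hj.
  apply/eqP; rewrite eq_le hp andbT leNgt; apply/negP => h; apply: hn; by exists j.
have hin : refl (dl i) g \in Phi := refl_in hRS (dl_in hbas i) hg.
case: (root_sign hbas hin) => // hn; exfalso.
have := hn j; rewrite coef_refl_dl eq_sym (negbTE hj) mulr0 subr0; lra.
Qed.

Lemma CP_dl j : CP (dl j).
Proof.
move=> i; rewrite (coef_dl hbas); case: eqP => [->|_]; last by rewrite !mul0r; exact: isint0.
rewrite mul1r divff; first exact: isint1.
exact: (lt0r_neq0 (dotv_gt0 (dl_neq0 _))).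
Qed.

Lemma CP_refl (y : V) i : y \in Phi -> CP y -> CP (refl (dl i) y).
Proof.
move=> hy hcp j; rewrite refl_len ?dl_neq0 // coef_refl_dl.
have hyy := dotv_gt0 (root_neq0 hRS hy); have hii := dotv_gt0 (dl_neq0 i).
case: (eqVneq i j) => [<-|hij]; last by rewrite mulr0 subr0; exact: hcp.
have -> : (c i y - ncart y (dl i) * 1%:R) * d (dl i) (dl i) / d y y =
   c i y * d (dl i) (dl i) / d y y - ncart (dl i) y.
  rewrite /ncart (dotvC y); field; apply/andP; split; exact: lt0r_neq0.
apply: isintB; first exact: hcp.
exact: (ncart_int hRS hy (dl_in hbas i)).
Qed.

Lemma CP_opp (g : V) : CP g -> CP (- g).
Proof.
move=> h i; rewrite coefvN dotvNl dotvNr opprK !mulNr; exact: isintN.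
Qed.

Lemma CP_pos (k : nat) : forall g : V, g \in Phi -> pos Delta g -> hgt g <= k%:R -> CP g.
Proof.
elim: k => [|k IH] g hg hp hk;
  (case: (EM (exists i, g = dl i)) => [[i ->]|hns]; first exact: CP_dl);
  (have [i [hp1 hk1 hh1]] : exists i, [/\ pos Delta (refl (dl i) g), 1 <= ncart g (dl i) &
    hgt (refl (dl i) g) = hgt g - ncart g (dl i)]
    by apply: descent => // i; apply/eqP => e; apply: hns; exists i);
  have hin : refl (dl i) g \in Phi := refl_in hRS (dl_in hbas i) hg;
  have := pos_hgt hin hp1.
  by rewrite hh1; lra.
move=> _; rewrite -(refl_invol g (dl_neq0 i)); apply: CP_refl => //.
by apply: IH => //; rewrite hh1; move: hk; rewrite -natr1; lra.
Qed.

Lemma CP_root (g : V) : g \in Phi -> CP g.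
Proof.
have gen : forall g, g \in Phi -> pos Delta g -> CP g.
  move=> h hg hp; have [z ez] : isint (hgt h).
    by apply: isint_sum => i _; exact: (root_int hbas i hg).
  apply: (@CP_pos `|z|%N) => //; rewrite ez natr_absz ler_int; exact: ler_norm.
move=> hg; case: (root_sign hbas hg) => hs; first exact: gen.
rewrite -(opprK g); apply: CP_opp; apply: gen; first exact: (opp_in hRS hg).
by move=> i; rewrite coefvN oppr_ge0.
Qed.

End RS3.



Section RS4.
Variables (R : realType) (n l : nat) (Phi : seq 'rV[R]_n) (Delta : l.-tuple 'rV[R]_n).
Variable ta : 'rV[R]_n.
Hypotheses (hRS : is_reduced_root_system Phi) (hirr : is_irreducible Phi)
  (hbas : is_basis Phi Delta).
Local Notation V := 'rV[R]_n.
Local Notation d := (@dotv R n).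
Local Notation dl i := (tnth Delta i).
Local Notation c := (coef Delta).
Local Notation M := (maxsq Phi).
Local Notation H := (htv Phi Delta ta).
Local Notation ht := (htv Phi Delta).
Local Notation lev := (level Phi Delta ta).

Lemma htvB (x y : V) : ht (x - y) = ht x - ht y.
Proof.
rewrite !(htvE hRS hirr hbas) -sumrB; apply: eq_bigr => i _; rewrite coefvB; ring.
Qed.

Lemma htvZ k (x : V) : ht (k *: x) = k * ht x.
Proof.
rewrite !(htvE hRS hirr hbas) mulr_sumr; apply: eq_bigr => i _; rewrite coefvZ; ring.
Qed.

Lemma htvN (x : V) : ht (- x) = - ht x.
Proof. by rewrite -scaleN1r htvZ mulN1r. Qed.

Lemma htv_dl i : ht (dl i) = d (dl i) (dl i) / M.
Proof.
rewrite (htvE hRS hirr hbas) (bigD1 i) //= (coef_dl hbas) eqxx mulr1 big1 ?addr0 //.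
by move=> j hj; rewrite (coef_dl hbas) eq_sym (negbTE hj) mulr0.
Qed.

Lemma htv_dl_long i : long Phi (dl i) -> ht (dl i) = 1.
Proof.
move=> /(longP hirr) [_ e]; rewrite htv_dl e divff //.
exact: (lt0r_neq0 (M_gt0 hRS hirr)).
Qed.

Lemma M_neq0 : M != 0. Proof. exact: (lt0r_neq0 (M_gt0 hRS hirr)). Qed.

Lemma htv_pos (g : V) : rlt Delta 0 g -> 0 < ht g.
Proof.
move=> /(rlt0E hRS hbas) [hp hg0]; have [i hi] := pos_nz hRS hbas hp hg0.
rewrite (htvE hRS hirr hbas) (bigD1 i) //=.
have hii := dotv_gt0 (dl_neq0 hRS hbas i); have hM := M_gt0 hRS hirr.
apply: (@lt_le_trans _ _ (d (dl i) (dl i) / M * c i g)).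
  by apply: mulr_gt0 => //; apply: divr_gt0.
rewrite lerDl; apply: sumr_ge0 => j _; apply: mulr_ge0 => //.
by apply: divr_ge0 => //; [exact: dotv_ge0 | exact: ltW].
Qed.

Lemma term_int (z : V) i : long Phi z -> isint (d (dl i) (dl i) / M * c i z).
Proof.
move=> /(longP hirr) [hz e]; have := CP_root hRS hbas hz i; rewrite e.
by rewrite [X in _ -> isint X]mulrC mulrA.
Qed.

Lemma htv_long_ge1 (z : V) : long Phi z -> rlt Delta 0 z -> 1 <= ht z.
Proof.
move=> hl hr; apply: isint_ge1; last exact: htv_pos.
rewrite (htvE hRS hirr hbas); apply: isint_sum => i _; exact: term_int.
Qed.

Lemma htv1_simple (z : V) : long Phi z -> rlt Delta 0 z -> ht z = 1 ->
  exists i, z = dl i /\ long Phi (dl i).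
Proof.
move=> hl hr e; have [hz _] := longP hirr hl.
have /(rlt0E hRS hbas) [hp hz0] := hr.
have [i hi] := pos_nz hRS hbas hp hz0.
have hM := M_gt0 hRS hirr.
have hterm j : 0 <= d (dl j) (dl j) / M * c j z.
  apply: mulr_ge0 => //; apply: divr_ge0 => //; [exact: dotv_ge0 | exact: ltW].
have hti : 1 <= d (dl i) (dl i) / M * c i z.
  apply: isint_ge1; first exact: term_int.
  apply: mulr_gt0 => //; apply: divr_gt0 => //; exact: dotv_gt0 (dl_neq0 hRS hbas i).
move: e; rewrite (htvE hRS hirr hbas) (bigD1 i) //= => e.
have hrest : \sum_(j | j != i) d (dl j) (dl j) / M * c j z = 0.
  apply/eqP; rewrite eq_le; apply/andP; split; last by apply: sumr_ge0.
  move: e hti; set S := \sum_(j | _) _; set t := _ * c i z; clear; lra.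
have h0 := psumr_eq0P (fun j _ => hterm j) hrest.
have ez : z = dl i.
  apply: (prop_dl hRS hbas) => // j hj; have := h0 j hj; move/eqP.
  rewrite mulf_eq0 => /orP[|/eqP //]; rewrite mulf_eq0 invr_eq0 (negbTE M_neq0) orbF.
  by rewrite (negbTE (lt0r_neq0 (dotv_gt0 (dl_neq0 hRS hbas j)))).
by exists i; split => //; rewrite -ez.
Qed.

Lemma not_pos_neg (x : V) : rlt Delta x 0 -> ~ rlt Delta 0 x.
Proof.
move=> /(rltE0 hRS hbas) [hn h0] /(rlt0E hRS hbas) [hp _].
by move/eqP: h0; apply; apply: (pos_neg0 hRS hbas).
Qed.

Lemma levP (x : V) : rlt Delta 0 x -> lev x = H - ht x.
Proof. by move=> h; rewrite /level asboolT. Qed.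

Lemma levN (x : V) : rlt Delta x 0 -> lev x = H - ht x - 1.
Proof. by move=> h; rewrite /level asboolF //; exact: not_pos_neg. Qed.

Lemma long_in (x : V) : long Phi x -> x \in Phi.
Proof. by case/(longP hirr). Qed.

Lemma long_refl (g x : V) : g \in Phi -> long Phi x -> long Phi (refl g x).
Proof.
move=> hg hx; have [hxin e] := longP hirr hx.
by rewrite (longE hirr) (refl_in hRS) //= refl_len ?e ?eqxx // (root_neq0 hRS hg).
Qed.

Lemma long_opp (x : V) : long Phi x -> long Phi (- x).
Proof.
move=> hx; have [hxin e] := longP hirr hx.
by rewrite (longE hirr) (opp_in hRS) //= dotvNl dotvNr opprK e eqxx.
Qed.

Lemma dl_pos i : rlt Delta 0 (dl i).
Proof.
apply/(rlt0E hRS hbas); split; last exact: (dl_neq0 hRS hbas).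
by move=> j; rewrite (coef_dl hbas) ler0n.
Qed.

Lemma dl_neg i : rlt Delta (- dl i) 0.
Proof.
apply/(rltE0 hRS hbas); split; last by rewrite oppr_eq0 (dl_neq0 hRS hbas).
by move=> j; rewrite coefvN (coef_dl hbas) oppr_le0 ler0n.
Qed.

Lemma step (a b : V) : long Phi a -> long Phi b -> rle Delta a b -> a != b ->
  rlt Delta 0 a \/ rlt Delta b 0 ->
  exists i, [/\ arrow Phi Delta ta b (dl i) (refl (dl i) b), rle Delta a (refl (dl i) b),
     (rlt Delta b 0 -> rlt Delta (refl (dl i) b) 0) &
     hgt Delta (refl (dl i) b - a) <= hgt Delta (b - a) - 1].
Proof.
move=> hla hlb hab hne hsign.
have [ha ea] := longP hirr hla; have [hb eb] := longP hirr hlb.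
have hM := M_gt0 hRS hirr.
have /(rle_coef hRS hbas) hcab := hab.
have hdab : d a b < M.
  have : 0 < d (a - b) (a - b) by apply: dotv_gt0; rewrite subr_eq0.
  rewrite !(dotvBl, dotvBr) ea eb (dotvC b a); lra.
have [i [hci hdi]] : exists i, 0 < c i (b - a) /\ 0 < d (dl i) b.
  case: (EM (exists i, 0 < c i (b - a) /\ 0 < d (dl i) b)) => // hn; exfalso.
  have : d (b - a) b <= 0.
    rewrite (dot_decomp hRS hbas); apply: sumr_le0 => i _.
    have hc : 0 <= c i (b - a) by rewrite coefvB subr_ge0.
    case: (ltrgtP 0 (c i (b - a))) => [h||<-]; last by rewrite mul0r.
      rewrite mulr_ge0_le0 //; rewrite leNgt; apply/negP => h'; apply: hn; by exists i.
    by move=> h; move: hc; rewrite leNgt h.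
  rewrite dotvBl eb; lra.
set de := dl i.
have hde := dl_in hbas i; have hdd := dotv_gt0 (dl_neq0 hRS hbas i).
have hdM : d de de <= M := maxsq_ge hde.
have hnp : forall k, de <> k *: b.
  move=> k ek; case: (red hRS hde hb ek) => hk; rewrite hk in ek.
    rewrite scale1r in ek.
    case: hsign => [hpa|hnb]; last first.
      by apply: (not_pos_neg hnb); rewrite -ek; apply: dl_pos.
    have /(rlt0E hRS hbas) [hpa' _] := hpa.
    move/eqP: hne; apply; rewrite -ek; apply: (prop_dl hRS hbas) => // j hj.
    apply/eqP; rewrite eq_le hpa' andbT; apply: le_trans (hcab j) _.
    by rewrite -ek (coef_dl hbas) eq_sym (negbTE hj).
  move: hdi; rewrite -/de ek scaleN1r dotvNl eb; lra.
have hle : d de de <= d b b by rewrite eb.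
have [z1 [z2 [e1 e2 hz]]] := cartan hRS hde hb hle hnp.
have hrel := ncart_rel hRS hde hb; rewrite e1 e2 eb in hrel.
have hz1 : 0 < z1.
  rewrite -(ltr0z R) -e1 /ncart; apply: divr_gt0; last by rewrite eb.
  by apply: mulr_gt0.
have [hz1e hz2] : z1 = 1 /\ 0 < z2.
  case: hz => [[h _]|[[h1 /andP[h2 _]]|[h1 _]]]; [by rewrite h in hz1 | by [] | by rewrite h1 in hz1].
rewrite hz1e /= mulr1 in hrel.
(* hrel : M = d de de * z2 *)
set k2 := ncart b de.
have hk2 : k2 = M / d de de by rewrite /k2 e2 hrel mulrC mulKf // lt0r_neq0.
have hk2pos : 1 <= k2 by rewrite hk2 ler_pdivlMr // mul1r.
have hkey : forall j, c j a <= c j (refl de b).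
  move=> j; rewrite (coef_refl_dl hbas) -/k2; case: (eqVneq i j) => [<-|hij];
    last by rewrite mulr0 subr0 hcab.
  rewrite mulr1.
  have hint : isint ((c i b - c i a) * d de de / M).
    have := isintB (CP_root hRS hbas hb i) (CP_root hRS hbas ha i).
    by rewrite eb ea -mulrBl -mulrBl.
  have := isint_ge1 hint; rewrite coefvB in hci.
  have hpos : 0 < (c i b - c i a) * d de de / M.
    by apply: divr_gt0 => //; apply: mulr_gt0; lra.
  move=> /(_ hpos); rewrite ler_pdivlMr // mul1r => h.
  have : M / d de de <= c i b - c i a by rewrite ler_pdivrMr.
  rewrite -hk2 => hh; move: hh; clear; move=> hh; lra.
have hb1 := long_refl hde hlb.
have hle1 : forall j, c j (refl de b) <= c j b.
  move=> j; rewrite (coef_refl_dl hbas) -/k2 lerBlDr lerDl.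
  by apply: mulr_ge0; [lra | exact: ler0n].
have hnegb : rlt Delta b 0 -> rlt Delta (refl de b) 0.
  move=> /(rltE0 hRS hbas) [hn _]; apply/(rltE0 hRS hbas); split.
    by move=> j; apply: le_trans (hle1 j) (hn j).
  exact: (root_neq0 hRS (long_in hb1)).
have hhtv : ht (refl de b) = ht b - 1.
  rewrite reflE -/k2 htvB htvZ /de htv_dl -/de hk2 mulrA divfK ?lt0r_neq0 // divff //.
  exact: M_neq0.
exists i; split.
- split => //; first by rewrite hlb hb1.
  + exact: dl_pos.
  + case: hsign => [hpa|hnb].
    * have hp1 : rlt Delta 0 (refl de b).
        apply/(rlt0E hRS hbas); split; last exact: (root_neq0 hRS (long_in hb1)).
        move=> j; have /(rlt0E hRS hbas) [hpa' _] := hpa; exact: le_trans (hpa' j) (hkey j).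
      have hpb : rlt Delta 0 b.
        apply/(rlt0E hRS hbas); split; last exact: (root_neq0 hRS hb).
        move=> j; have /(rlt0E hRS hbas) [hpa' _] := hpa; exact: le_trans (hpa' j) (hcab j).
      by rewrite (levP hp1) (levP hpb) hhtv; ring.
    * by rewrite (levN (hnegb hnb)) (levN hnb) hhtv; ring.
- by apply/(rle_coef hRS hbas).
- exact: hnegb.
- have -> : refl de b - a = (b - a) - k2 *: de by rewrite reflE -/k2 addrAC.
  rewrite hgtB /de (hgt_dl hbas) -/de.
  move: hk2pos; clear; move=> h; lra.
Qed.


Lemma hgt_ge0 (a b : V) : rle Delta a b -> 0 <= hgt Delta (b - a).
Proof.
move=> /(rle_coef hRS hbas) h; apply: sumr_ge0 => i _; rewrite coefvB subr_ge0; exact: h.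
Qed.

Lemma ss_path (k : nat) : forall a b : V, long Phi a -> long Phi b -> rle Delta a b ->
  (rlt Delta 0 a \/ rlt Delta b 0) -> hgt Delta (b - a) <= k%:R ->
  exists steps, is_path Phi Delta ta b steps a /\
    all (fun p => p.1 \in (Delta : seq V)) steps.
Proof.
elim: k => [|k IH] a b hla hlb hab hs hk;
  (case: (eqVneq a b) => [<-|hne]; first by exists [::]);
  have [i [har hab1 hneg hh]] := step hla hlb hab hne hs;
  have := hgt_ge0 hab1.
  by move: hk hh; set u := hgt _ _; set v := hgt _ _; move=> hk hh hu; lra.
move=> hge.
have hs' : rlt Delta 0 a \/ rlt Delta (refl (dl i) b) 0.
  by case: hs => h; [left | right; exact: hneg].
have hk' : hgt Delta (refl (dl i) b - a) <= k%:R.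
  by move: hk hh; rewrite -natr1; set u := hgt _ _; set v := hgt _ _; move=> hk hh; lra.
have [s [hp hsimp]] := IH a (refl (dl i) b) hla (long_refl (dl_in hbas i) hlb) hab1 hs' hk'.
exists ((dl i, refl (dl i) b) :: s); split => //=.
by rewrite hsimp andbT mem_tnth.
Qed.

Lemma ss (a b : V) : long Phi a -> long Phi b -> rle Delta a b ->
  (rlt Delta 0 a \/ rlt Delta b 0) -> has_simple_path Phi Delta ta b a.
Proof.
move=> hla hlb hab hs; split => //.
have [z ez] : isint (hgt Delta (b - a)).
  apply: isint_sum => i _; rewrite coefvB; apply: isintB.
    exact: (root_int hbas i (long_in hlb)).
  exact: (root_int hbas i (long_in hla)).
apply: (@ss_path `|z|%N) => //; rewrite ez natr_absz ler_int; exact: ler_norm.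
Qed.

Lemma is_path_cat (b c0 a : V) s1 s2 : is_path Phi Delta ta b s1 c0 ->
  is_path Phi Delta ta c0 s2 a -> is_path Phi Delta ta b (s1 ++ s2) a.
Proof.
elim: s1 b => [|[g b1] s IH] b /= h1 h2; first by rewrite h1.
by case: h1 => ha hp; split => //; apply: IH hp h2.
Qed.

Lemma arrow_dec (x g y : V) : arrow Phi Delta ta x g y ->
  rle Delta y x /\ (rlt Delta 0 x -> rlt Delta y 0 -> ht x - ht y = 2).
Proof.
case=> /andP[hlx hly] hg hgp ey hlev.
have hx := long_in hlx; have hy := long_in hly.
have hdiff : ht x - ht y = ncart x g * ht g by rewrite ey reflE htvB htvZ; ring.
have hgpos := htv_pos hgp.
have hkpos : 0 < ncart x g -> rle Delta y x.
  move=> hk; apply/(rle_coef hRS hbas) => j; rewrite ey reflE coefvB coefvZ.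
  have /(rlt0E hRS hbas) [hpg _] := hgp; rewrite lerBlDr lerDl.
  by apply: mulr_ge0 => //; exact: ltW.
have hk1 : ht x - ht y = 1 -> 0 < ncart x g.
  move=> e; have : 0 < ncart x g * ht g by rewrite -hdiff e.
  by rewrite pmulr_lgt0.
case: (root_pn hRS hbas hx) => hsx; case: (root_pn hRS hbas hy) => hsy.
- rewrite (levP hsy) (levP hsx) in hlev.
  split; last by move=> _ /not_pos_neg.
  apply: hkpos; apply: hk1; lra.
- rewrite (levN hsy) (levP hsx) in hlev.
  have e2 : ht x - ht y = 2 by lra.
  split => //; apply: hkpos.
  have : 0 < ncart x g * ht g by rewrite -hdiff e2.
  by rewrite pmulr_lgt0.
- rewrite (levP hsy) (levN hsx) in hlev; exfalso.
  have : ncart x g * ht g = 0 by rewrite -hdiff; lra.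
  move/eqP; rewrite mulf_eq0 (negbTE (lt0r_neq0 hgpos)) orbF => /eqP hk0.
  by apply: (not_pos_neg hsx); move: hsy; rewrite ey reflE hk0 scale0r subr0.
- rewrite (levN hsy) (levN hsx) in hlev.
  split; last by move=> /not_pos_neg.
  apply: hkpos; apply: hk1; lra.
Qed.


Lemma rle_refl (x : V) : rle Delta x x.
Proof. by apply/(rle_coef hRS hbas). Qed.

Lemma path_le (b a : V) s : is_path Phi Delta ta b s a -> rle Delta a b.
Proof.
elim: s b => [|[g b1] s IH] b /=; first by move=> ->; exact: rle_refl.
case=> har hp; exact: (rle_trans hRS hbas (IH _ hp) (arrow_dec har).1).
Qed.

Lemma crossing (b a : V) s : is_path Phi Delta ta b s a -> rlt Delta 0 b -> rlt Delta a 0 ->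
  exists x g y, [/\ arrow Phi Delta ta x g y, rlt Delta 0 x, rlt Delta y 0,
    rle Delta x b /\ rle Delta a y &
    (all (fun p => p.1 \in (Delta : seq V)) s -> g \in (Delta : seq V))].
Proof.
elim: s b => [|[g b1] s IH] b /=.
  by move=> -> hp hn; exfalso; exact: (not_pos_neg hn hp).
case=> har hp hpb hna.
have [/andP[_ hl1] _ _ _ _] := har.
case: (root_pn hRS hbas (long_in hl1)) => h1.
- have [x [g' [y [hxy hx hy [hxb hay] hsim]]]] := IH b1 hp h1 hna.
  exists x, g', y; split => //.
    by split => //; exact: (rle_trans hRS hbas hxb (arrow_dec har).1).
  by move=> /andP[_ /hsim].
- exists b, g, b1; split => //; last by move=> /andP[].
  by split; [exact: rle_refl | exact: (path_le hp)].
Qed.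

Lemma cross_core (x g y : V) : arrow Phi Delta ta x g y -> rlt Delta 0 x -> rlt Delta y 0 ->
  exists i j, [/\ x = dl i, y = - dl j, long Phi (dl i) & long Phi (dl j)].
Proof.
move=> har hx hy; have [_ /(_ hx hy) hd] := arrow_dec har.
have [/andP[hlx hly] _ _ _ _] := har.
have hny : rlt Delta 0 (- y).
  have /(rltE0 hRS hbas) [hn h0] := hy; apply/(rlt0E hRS hbas); split.
    by move=> j; rewrite coefvN oppr_ge0.
  by rewrite oppr_eq0.
have h1 := htv_long_ge1 hlx hx; have h2 := htv_long_ge1 (long_opp hly) hny.
rewrite htvN in h2.
have ex : ht x = 1 by lra.
have ey : ht (- y) = 1 by rewrite htvN; lra.
have [i [exi hli]] := htv1_simple hlx hx ex.
have [j [eyj hlj]] := htv1_simple (long_opp hly) hny ey.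
by exists i, j; split => //; rewrite -eyj opprK.
Qed.

Lemma supp_b (b : V) i : rle Delta (dl i) b -> c i b != 0.
Proof.
move=> /(rle_coef hRS hbas) /(_ i); rewrite (coef_dl hbas) eqxx => h.
by apply: lt0r_neq0; apply: lt_le_trans h.
Qed.

Lemma supp_a (a : V) j : rle Delta a (- dl j) -> c j a != 0.
Proof.
move=> /(rle_coef hRS hbas) /(_ j); rewrite coefvN (coef_dl hbas) eqxx => h.
by apply: ltr0_neq0; apply: le_lt_trans h _; rewrite oppr_lt0.
Qed.

Lemma simple_cross (a b : V) i : long Phi a -> long Phi b -> rlt Delta a 0 ->
  rlt Delta 0 b -> long Phi (dl i) -> c i b != 0 -> c i a != 0 ->
  has_simple_path Phi Delta ta b a.
Proof.
move=> hla hlb hna hpb hli hJ hK.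
have hbi : rle Delta (dl i) b.
  apply/(rle_coef hRS hbas) => j; have /(rlt0E hRS hbas) [hp _] := hpb.
  rewrite (coef_dl hbas); case: eqP => [<-|_]; last exact: hp.
  apply: isint_ge1; first exact: (root_int hbas i (long_in hlb)).
  by rewrite lt_neqAle eq_sym hJ hp.
have hai : rle Delta a (- dl i).
  apply/(rle_coef hRS hbas) => j; have /(rltE0 hRS hbas) [hn _] := hna.
  rewrite coefvN (coef_dl hbas); case: eqP => [<-|_]; last by rewrite oppr0; exact: hn.
  rewrite lerNr; apply: isint_ge1; first exact: (isintN (root_int hbas i (long_in hla))).
  by rewrite oppr_gt0 lt_neqAle hK hn.
have [_ [s1 [hp1 hs1]]] := ss hli hlb hbi (or_introl (dl_pos i)).
have [_ [s2 [hp2 hs2]]] := ss hla (long_opp hli) hai (or_intror (dl_neg i)).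
split => //; exists (s1 ++ (dl i, - dl i) :: s2); split.
  apply: is_path_cat hp1 _ => /=; split => //; split => //.
  - by rewrite hli long_opp.
  - exact: dl_in.
  - exact: dl_pos.
  - by rewrite refl_aa // (dl_neq0 hRS hbas).
  - by rewrite (levN (dl_neg i)) (levP (dl_pos i)) htvN htv_dl_long //; ring.
by rewrite all_cat hs1 /= mem_tnth hs2.
Qed.

Lemma simple_nec (a b : V) : rlt Delta a 0 -> rlt Delta 0 b ->
  has_simple_path Phi Delta ta b a -> exists i, [/\ long Phi (dl i), c i b != 0 & c i a != 0].
Proof.
move=> hna hpb [hlb [s [hp hs]]].
have [x [g [y [har hx hy [hxb hay] hsim]]]] := crossing hp hpb hna.
have [i [j [exi eyj hli hlj]]] := cross_core har hx hy.
have /tnthP [k ek] := hsim hs.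
suff eij : i = j.
  exists i; split => //; first by apply: supp_b; rewrite -exi.
  by apply: supp_a; rewrite eij -eyj.
have [_ _ _ ey _] := har.
apply/eqP; case: (eqVneq i j) => // hij; exfalso.
have hji : j != i by rewrite eq_sym.
have ci := congr1 (c i) ey.
rewrite ek exi (coef_refl_dl hbas) eyj coefvN !(coef_dl hbas) eqxx (negbTE hji) in ci.
have cj := congr1 (c j) ey.
rewrite ek exi (coef_refl_dl hbas) eyj coefvN !(coef_dl hbas) eqxx (negbTE hij) in cj.
move: ci cj; set t := ncart _ _.
case: (eqVneq k i) => [eki|hki]; case: (eqVneq k j) => [ekj|hkj] //=.
- by move: hij; rewrite -eki -ekj eqxx.
- move=> h1 h2; clear -h1 h2; lra.
- move=> h1 h2; clear -h1 h2; lra.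
- move=> h1 h2; clear -h1 h2; lra.
Qed.


Lemma int_unit (u v : R) : isint u -> isint v -> u * v = 1 -> u ^+ 2 = 1.
Proof.
move=> [z1 ->] [z2 ->]; rewrite -intrM => h.
have hz : z1 * z2 = 1 by apply/eqP; rewrite -(eqr_int R) h.
have hz2 : z1 * z1 = 1.
  clear h.
  have hza : z1 != 0.
    by apply/eqP => e; move: hz; rewrite e mul0r.
  have hzb : z2 != 0.
    by apply/eqP => e; move: hz; rewrite e mulr0.
  have hc1 : (z1 < 0 \/ 0 < z1)%R.
    by move: hza; clear; lia.
  have hc2 : (z2 < 0 \/ 0 < z2)%R.
    by move: hzb; clear; lia.
  case: hc1 => h1; case: hc2 => h2; nia.
by rewrite expr2 -intrM hz2.
Qed.

Lemma path_nec (a b : V) : rlt Delta a 0 -> rlt Delta 0 b -> has_path Phi Delta ta b a ->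
  exists i j, [/\ long Phi (dl i), c i b != 0, long Phi (dl j), c j a != 0 &
                 d (dl i) (dl j) != 0].
Proof.
move=> hna hpb [hlb [s hp]].
have [x [g [y [har hx hy [hxb hay] _]]]] := crossing hp hpb hna.
have [i [j [exi eyj hli hlj]]] := cross_core har hx hy.
exists i, j; split => //.
- by apply: supp_b; rewrite -exi.
- by apply: supp_a; rewrite -eyj.
have [/andP[hlx _] hg _ ey _] := har.
case: (eqVneq i j) => [<-|hij]; first exact: (lt0r_neq0 (dotv_gt0 (dl_neq0 hRS hbas i))).
apply/negP => /eqP h0.
set t := ncart x g.
have et : t *: g = dl i + dl j.
  rewrite -exi -[dl j]opprK -eyj ey reflE -/t.
  by rewrite opprB addrC subrK.
have ci := congr1 (c i) et.
rewrite coefvZ coefvD !(coef_dl hbas) eqxx eq_sym (negbTE hij) addr0 in ci.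
have ht2 : t ^+ 2 = 1.
  apply: (int_unit _ _ ci).
    exact: (ncart_int hRS hg (long_in hlx)).
  exact: (root_int hbas i hg).
have hgg : d (t *: g) (t *: g) = d g g by rewrite dotvZl dotvZr mulrA -expr2 ht2 mul1r.
rewrite et dotvDl !dotvDr h0 (dotvC (dl j) (dl i)) h0 in hgg.
have [_ ei] := longP hirr hli; have [_ ej] := longP hirr hlj.
rewrite ei ej in hgg.
have h1 := maxsq_ge hg; have h2 := M_gt0 hRS hirr.
clear exi eyj ey et; lra.
Qed.

Lemma le_dl_b (b : V) i : long Phi b -> rlt Delta 0 b -> c i b != 0 -> rle Delta (dl i) b.
Proof.
move=> hlb hpb hJ.
apply/(rle_coef hRS hbas) => j; have /(rlt0E hRS hbas) [hp _] := hpb.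
rewrite (coef_dl hbas); case: eqP => [<-|_]; last exact: hp.
apply: isint_ge1; first exact: (root_int hbas i (long_in hlb)).
by rewrite lt_neqAle eq_sym hJ hp.
Qed.

Lemma le_a_dl (a : V) i : long Phi a -> rlt Delta a 0 -> c i a != 0 -> rle Delta a (- dl i).
Proof.
move=> hla hna hK.
apply/(rle_coef hRS hbas) => j; have /(rltE0 hRS hbas) [hn _] := hna.
rewrite coefvN (coef_dl hbas); case: eqP => [<-|_]; last by rewrite oppr0; exact: hn.
rewrite lerNr; apply: isint_ge1; first exact: (isintN (root_int hbas i (long_in hla))).
by rewrite oppr_gt0 lt_neqAle hK hn.
Qed.

Lemma path_suf (a b : V) i j : long Phi a -> long Phi b -> rlt Delta a 0 -> rlt Delta 0 b ->
  long Phi (dl i) -> c i b != 0 -> long Phi (dl j) -> c j a != 0 -> d (dl i) (dl j) != 0 ->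
  has_path Phi Delta ta b a.
Proof.
move=> hla hlb hna hpb hli hJ hlj hK hd.
case: (eqVneq i j) => [eij|hij].
  have hK' : c i a != 0 by rewrite eij.
  have [_ [s [hp _]]] := simple_cross hla hlb hna hpb hli hJ hK'.
  by split => //; exists s.
have hji : j != i by rewrite eq_sym.
have [_ ei] := longP hirr hli; have [_ ej] := longP hirr hlj.
have hM := M_gt0 hRS hirr.
have hnp : forall k, dl i <> k *: dl j.
  move=> k e; have := congr1 (c i) e; rewrite coefvZ !(coef_dl hbas) eqxx (negbTE hji) mulr0.
  by move/eqP; rewrite oner_eq0.
have hle : d (dl i) (dl i) <= d (dl j) (dl j) by rewrite ei ej.
have [z1 [z2 [e1 e2 hz]]] := cartan hRS (dl_in hbas i) (dl_in hbas j) hle hnp.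
have hz1 : z1 != 0 by rewrite -(intr_eq0 R) -e1 (ncart_eq0 hRS _ (dl_in hbas j)).
have hgin : refl (dl j) (dl i) \in Phi := refl_in hRS (dl_in hbas j) (dl_in hbas i).
have hcg m : c m (refl (dl j) (dl i)) = (i == m)%:R - z1%:~R * (j == m)%:R.
  by rewrite (coef_refl_dl hbas) e1 (coef_dl hbas).
have hz1m : z1 = -1.
  case: hz => [[h _]|[[h1 _]|[h1 _]]]; [by rewrite h in hz1 | | by []].
  exfalso; case: (root_sign hbas hgin) => hs.
    by have := hs j; rewrite hcg h1 eqxx (negbTE hij) sub0r mul1r oppr_ge0 ler10.
  by have := hs i; rewrite hcg h1 eqxx (negbTE hji) mulr0 subr0 ler10.
set gm := refl (dl j) (dl i).
have hdij : d (dl i) (dl j) = - M / 2.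
  have := e1; rewrite hz1m /ncart ej => h.
  have hM0 : M != 0 by exact: M_neq0.
  have -> : d (dl i) (dl j) = (2 * d (dl i) (dl j) / M) * M / 2.
    by field; exact: hM0.
  by rewrite h; ring.
have hm1 : ((-1 : int)%:~R : R) = -1 by [].
have hegm : gm = dl i + dl j by rewrite /gm reflE e1 hz1m hm1 scaleN1r opprK.
have hgg : d gm gm = M by rewrite /gm refl_len ?ei ?(dl_neq0 hRS hbas).
have hnc : ncart (dl i) gm = 1.
  rewrite /ncart hgg hegm dotvDr ei hdij.
  by field; exact: M_neq0.
have href : refl gm (dl i) = - dl j.
  by rewrite reflE hnc scale1r hegm opprD addrA subrr add0r.
have hgp : rlt Delta 0 gm.
  apply/(rlt0E hRS hbas); split; last exact: (root_neq0 hRS hgin).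
  move=> m; rewrite hegm coefvD !(coef_dl hbas); apply: addr_ge0; exact: ler0n.
have hbi := le_dl_b hlb hpb hJ.
have hai := le_a_dl hla hna hK.
have [_ [s1 [hp1 _]]] := ss hli hlb hbi (or_introl (dl_pos i)).
have [_ [s2 [hp2 _]]] := ss hla (long_opp hlj) hai (or_intror (dl_neg j)).
split => //; exists (s1 ++ (gm, - dl j) :: s2).
apply: is_path_cat hp1 _ => /=; split => //; split => //.
- by rewrite hli long_opp.
- by rewrite (levN (dl_neg j)) (levP (dl_pos i)) htvN !htv_dl_long //; ring.
Qed.

Theorem main_thm (alpha beta : V) :
  ta \in Phi -> (forall g, g \in Phi -> rle Delta g ta) ->
  long Phi alpha -> long Phi beta -> rle Delta alpha beta ->
  let J := fun i : 'I_l => coef Delta i beta != 0 in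
  let K := fun i : 'I_l => coef Delta i alpha != 0 in
  [/\ (rlt Delta 0 alpha -> has_simple_path Phi Delta ta beta alpha),
      (rlt Delta alpha 0 -> rlt Delta 0 beta ->
        (has_simple_path Phi Delta ta beta alpha <->
           exists i : 'I_l, [/\ long Phi (tnth Delta i), J i & K i]) /\
        (has_path Phi Delta ta beta alpha <->
           exists i j : 'I_l, [/\ long Phi (tnth Delta i), J i,
                                  long Phi (tnth Delta j), K j &
                                  dotv (tnth Delta i) (tnth Delta j) != 0])) &
      (rlt Delta beta 0 -> has_simple_path Phi Delta ta beta alpha)].
Proof.
move=> _ _ hla hlb hab J K; split.
- by move=> h; apply: ss => //; left.
- move=> hna hpb; split; split.
  + exact: simple_nec.
  + by case=> i [hli hJ hK]; exact: (simple_cross hla hlb hna hpb hli hJ hK).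
  + exact: path_nec.
  + by case=> i [j [hli hJ hlj hK hd]]; exact: (path_suf hla hlb hna hpb hli hJ hlj hK hd).
- by move=> h; apply: ss => //; right.
Qed.

End RS4.

Theorem proposition1p11 (R : realType) (n l : nat) (Phi : seq 'rV[R]_n)
    (Delta : l.-tuple 'rV[R]_n) (ta alpha beta : 'rV[R]_n) :
  is_reduced_root_system Phi -> is_irreducible Phi -> is_basis Phi Delta ->
  (* ta is the highest root *)
  ta \in Phi -> (forall g, g \in Phi -> rle Delta g ta) ->
  long Phi alpha -> long Phi beta -> rle Delta alpha beta ->
  (* J = support of beta, K = support of alpha *)
  let J := fun i : 'I_l => coef Delta i beta != 0 in
  let K := fun i : 'I_l => coef Delta i alpha != 0 in
  [/\ (rlt Delta 0 alpha -> has_simple_path Phi Delta ta beta alpha),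
      (rlt Delta alpha 0 -> rlt Delta 0 beta ->
        (has_simple_path Phi Delta ta beta alpha <->
           exists i : 'I_l, [/\ long Phi (tnth Delta i), J i & K i]) /\
        (has_path Phi Delta ta beta alpha <->
           exists i j : 'I_l, [/\ long Phi (tnth Delta i), J i,
                                  long Phi (tnth Delta j), K j &
                                  dotv (tnth Delta i) (tnth Delta j) != 0])) &
      (rlt Delta beta 0 -> has_simple_path Phi Delta ta beta alpha)].
Proof.
move=> hRS hirr hbas.
exact: (@main_thm R n l Phi Delta ta hRS hirr hbas alpha beta).
Qed.
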